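(* Let $R$ be an involutive $K$-algebra and $t$ a canonical, $K$-linear, $R$-valued trace on $L_K(E)$. (1) Let $p,q$ be paths with $\mathbf{r}(p)=\mathbf{r}(q)$, let $r_1,\dots,r_m$ be paths with $\mathbf{s}(r_i)=\mathbf{r}(p)$, and let $a_1,\dots,a_m\in K$. Put $x=\sum_{i=1}^m a_i\,pr_ir_i^*q^*$ and $y=\sum_{i=1}^m a_i\,r_ir_i^*$. Then $t(xx^* )=t(yy^* )$. (2) Suppose further that $t$ satisfies condition (P). Let $v$ be a vertex, let $e_1,\dots,e_m$ be distinct edges in $\mathbf{s}^{-1}(v)$, for each $i$ let $r_{i1},\dots,r_{im_i}$ be paths with $\mathbf{s}(r_{ij})=\mathbf{r}(e_i)$, and let $a,a_{ij}\in K$. Put $x=\sum_{i=1}^m\sum_{j=1}^{m_i}a_{ij}\,e_ir_{ij}r_{ij}^*e_i^*+av$ and $y=\sum_{i=1}^m\sum_{j=1}^{m_i}a_{ij}\,e_ir_{ij}r_{ij}^*e_i^*+a\sum_{i=1}^me_ie_i^*$. Then $t(xx^* )\ge t(yy^* )$ in $R$.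
   Context: A (directed) graph $E=(E^0,E^1,\mathbf{s},\mathbf{r})$ has vertex set $E^0$, edge set $E^1$, source and range maps; no finiteness or countability is assumed. A path is a vertex $v$ (length $0$) or a sequence $p=e_1\cdots e_n$ of edges with $\mathbf{r}(e_i)=\mathbf{s}(e_{i+1})$, $\mathbf{s}(p)=\mathbf{s}(e_1)$, $\mathbf{r}(p)=\mathbf{r}(e_n)$. A vertex $v$ is regular if $\mathbf{s}^{-1}(v)$ is nonempty and finite. $K$ is a field with an arbitrary involution $a\mapsto a^*$. $L_K(E)$ is the free $K$-algebra generated by $E^0\cup E^1\cup\{e^*:e\in E^1\}$ subject to (V) $vw=\delta_{v,w}v$; (E1) $\mathbf{s}(e)e=e\mathbf{r}(e)=e$; (E2) $\mathbf{r}(e)e^*=e^*\mathbf{s}(e)=e^*$; (CK1) $e^*f=\delta_{e,f}\mathbf{r}(e)$; (CK2) $v=\sum_{e\in\mathbf{s}^{-1}(v)}ee^*$ for regular $v$; $p^*=e_n^*\cdots e_1^*$, $v^*=v$, and $L_K(E)$ is involutive via $(\sum a_ip_iq_i^* )^*=\sum a_i^*q_ip_i^*$. An involutive $K$-algebra is a $K$-algebra with an involution ($(xy)^*=y^*x^*$, $x^{**}=x$, additive) satisfying $(ax)^*=a^*x^*$; in it $x\ge0$ means $x$ is a finite sum of elements $zz^*$, and $x\ge y$ means $x-y\ge0$. A trace is an additive map with $t(xy)=t(yx)$; $K$-linear means $t(ax)=at(x)$. A trace on $L_K(E)$ is canonical if $t(pq^* )=\delta_{p,q}t(\mathbf{r}(p))$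 for all paths $p,q$ with $\mathbf{r}(p)=\mathbf{r}(q)$. Condition (P): $t\big(v-\sum_{e\in I}\mathbf{r}(e)\big)\ge0$ for every vertex $v$ and every finite subset $I\subseteq\mathbf{s}^{-1}(v)$ (for $I=\emptyset$ this reads $t(v)\ge0$). *)

(* Defs.v *)
From HB Require Import structures.
From mathcomp Require Import all_boot all_order all_algebra.
From Stdlib Require List.

Set Implicit Arguments.
Unset Strict Implicit.
Unset Printing Implicit Defensive.
Import GRing.Theory.
Local Open Scope ring_scope.

Record fld_invol (K : fieldType) := FInv {
  fconj : K -> K;
  fconjD : forall a b, fconj (a + b) = fconj a + fconj b;
  fconjM : forall a b, fconj (a * b) = fconj a * fconj b;
  fconjK : forall a, fconj (fconj a) = a }.

Record nalg (K : fieldType) := NAlg {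
  ncar :> lmodType K;
  nmul : ncar -> ncar -> ncar;
  nmulA : forall x y z, nmul x (nmul y z) = nmul (nmul x y) z;
  nmulDl : forall x y z, nmul (x + y) z = nmul x z + nmul y z;
  nmulDr : forall x y z, nmul x (y + z) = nmul x y + nmul x z;
  nmulZl : forall a x y, nmul (a *: x) y = a *: nmul x y;
  nmulZr : forall a x y, nmul x (a *: y) = a *: nmul x y }.

Notation "x ⋅ y" := (@nmul _ _ x y) (at level 40, left associativity).

Record ninv (K : fieldType) (c : fld_invol K) (A : nalg K) := NInv {
  nstar : A -> A;
  nstarD : forall x y, nstar (x + y) = nstar x + nstar y;
  nstarM : forall x y, nstar (x ⋅ y) = nstar y ⋅ nstar x;
  nstarK : forall x, nstar (nstar x) = x;
  nstarZ : forall a x, nstar (a *: x) = fconj c a *: nstar x }.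

(* x >= 0 : x is a finite sum of elements z z^star *)
Definition npos (K : fieldType) (c : fld_invol K) (R : nalg K) (s : ninv c R) (x : R) : Prop :=
  exists l : seq R, x = \sum_(z <- l) (z ⋅ nstar s z).

Record graph := Graph {
  vert : Type;
  edge : Type;
  src : edge -> vert;
  rng : edge -> vert }.

Section Paths.
Variable G : graph.

(* A path is a pair (v, l): v = s(p); l = edges e1 ... en (l = nil : path of length 0 = vertex v). *)
Fixpoint is_path (v : vert G) (l : list (edge G)) : Prop :=
  match l with
  | nil => True
  | e :: l' => src e = v /\ is_path (rng e) l'
  end.

Fixpoint path_rng (v : vert G) (l : list (edge G)) : vert G :=
  match l with
  | nil => v
  | e :: l' => path_rng (rng e) l'
  end.

Variables (K : fieldType) (A : nalg K).
Variables (P : vert G -> A) (X Y : edge G -> A).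

Fixpoint prodX (e : edge G) (l : list (edge G)) : A :=
  match l with
  | nil => X e
  | f :: l' => X e ⋅ prodX f l'
  end.

Fixpoint prodY (e : edge G) (l : list (edge G)) : A :=
  match l with
  | nil => Y e
  | f :: l' => prodY f l' ⋅ Y e
  end.

Definition pathA (v : vert G) (l : list (edge G)) : A :=
  match l with nil => P v | e :: l' => prodX e l' end.

Definition pathG (v : vert G) (l : list (edge G)) : A :=
  match l with nil => P v | e :: l' => prodY e l' end.

(* Relations (V), (E1), (E2), (CK1), (CK2). Finite sets s^{-1}(v) are given by
   duplicate-free enumerations. *)
Definition lpa_rels : Prop :=
  (forall v, P v ⋅ P v = P v) /\
  (forall v w, v <> w -> P v ⋅ P w = 0) /\
  (forall e, P (src e) ⋅ X e = X e /\ X e ⋅ P (rng e) = X e) /\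
  (forall e, P (rng e) ⋅ Y e = Y e /\ Y e ⋅ P (src e) = Y e) /\
  (forall e, Y e ⋅ X e = P (rng e)) /\
  (forall e f, e <> f -> Y e ⋅ X f = 0) /\
  (forall v (l : list (edge G)), l <> nil -> List.NoDup l ->
     (forall e, List.In e l <-> src e = v) ->
     P v = \sum_(e <- l) (X e ⋅ Y e)).

End Paths.

Definition nalg_hom (K : fieldType) (A B : nalg K) (phi : A -> B) : Prop :=
  (forall x y, phi (x + y) = phi x + phi y) /\
  (forall a x, phi (a *: x) = a *: phi x) /\
  (forall x y, phi (x ⋅ y) = phi x ⋅ phi y).

Definition is_LPA (G : graph) (K : fieldType) (c : fld_invol K) (A : nalg K) (s : ninv c A)
    (P : vert G -> A) (X Y : edge G -> A) : Prop :=
  lpa_rels P X Y /\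
  (forall (B : nalg K) (P' : vert G -> B) (X' Y' : edge G -> B), lpa_rels P' X' Y' ->
     (exists phi : A -> B, nalg_hom phi /\ (forall v, phi (P v) = P' v) /\
        (forall e, phi (X e) = X' e) /\ (forall e, phi (Y e) = Y' e)) /\
     (forall phi1 phi2 : A -> B,
        nalg_hom phi1 -> (forall v, phi1 (P v) = P' v) -> (forall e, phi1 (X e) = X' e) ->
        (forall e, phi1 (Y e) = Y' e) ->
        nalg_hom phi2 -> (forall v, phi2 (P v) = P' v) -> (forall e, phi2 (X e) = X' e) ->
        (forall e, phi2 (Y e) = Y' e) ->
        forall x, phi1 x = phi2 x)) /\
  (forall v, nstar s (P v) = P v) /\
  (forall e, nstar s (X e) = Y e) /\
  (forall e, nstar s (Y e) = X e).

Definition is_trace (K : fieldType) (A R : nalg K) (t : A -> R) : Prop :=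
  (forall x y, t (x + y) = t x + t y) /\ (forall x y, t (x ⋅ y) = t (y ⋅ x)).

Definition klinear (K : fieldType) (A R : nalg K) (t : A -> R) : Prop :=
  forall (a : K) x, t (a *: x) = a *: t x.

Definition canonical (G : graph) (K : fieldType) (A R : nalg K)
    (P : vert G -> A) (X Y : edge G -> A) (t : A -> R) : Prop :=
  forall v1 l1 v2 l2, is_path v1 l1 -> is_path v2 l2 -> path_rng v1 l1 = path_rng v2 l2 ->
    ((v1, l1) = (v2, l2) -> t (pathA P X v1 l1 ⋅ pathG P Y v2 l2) = t (P (path_rng v1 l1))) /\
    ((v1, l1) <> (v2, l2) -> t (pathA P X v1 l1 ⋅ pathG P Y v2 l2) = 0).

Definition condP (G : graph) (K : fieldType) (c : fld_invol K) (A R : nalg K) (sR : ninv c R)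
    (P : vert G -> A) (t : A -> R) : Prop :=
  forall (v : vert G) (I : list (edge G)), List.NoDup I -> (forall e, List.In e I -> src e = v) ->
    npos sR (t (P v - \sum_(e <- I) P (rng e))).

(* Main.v *)
Require Import Defs.
From HB Require Import structures.
From mathcomp Require Import all_boot all_order all_algebra.
From Stdlib Require List.
Set Implicit Arguments.
Unset Strict Implicit.
Import GRing.Theory.
Local Open Scope ring_scope.

Lemma addm0 (U V : zmodType) (f : U -> V) (Hf : forall x y, f (x + y) = f x + f y) :
  f 0 = 0.
Proof. apply/(addrI (f 0)); by rewrite -Hf !addr0. Qed.

Lemma addmN (U V : zmodType) (f : U -> V) (Hf : forall x y, f (x + y) = f x + f y) x :
  f (- x) = - f x.
Proof. apply/(addrI (f x)); by rewrite -Hf !subrr (addm0 Hf). Qed.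

Lemma addmB (U V : zmodType) (f : U -> V) (Hf : forall x y, f (x + y) = f x + f y) x y :
  f (x - y) = f x - f y.
Proof. by rewrite Hf (addmN Hf). Qed.

Lemma addm_sum (U V : zmodType) (f : U -> V) (Hf : forall x y, f (x + y) = f x + f y)
  (I : Type) (r : seq I) (Pr : pred I) (F : I -> U) :
  f (\sum_(i <- r | Pr i) F i) = \sum_(i <- r | Pr i) f (F i).
Proof. apply: (big_morph f) => //; exact: addm0. Qed.

Lemma nmul_sumr (K : fieldType) (A : nalg K) (x : A) (I : Type) (r : seq I) (Pr : pred I) (F : I -> A) :
  x ⋅ (\sum_(i <- r | Pr i) F i) = \sum_(i <- r | Pr i) (x ⋅ F i).
Proof. by apply: (addm_sum (f := fun y => x ⋅ y)) => y z; rewrite nmulDr. Qed.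

Lemma nmul_suml (K : fieldType) (A : nalg K) (x : A) (I : Type) (r : seq I) (Pr : pred I) (F : I -> A) :
  (\sum_(i <- r | Pr i) F i) ⋅ x = \sum_(i <- r | Pr i) (F i ⋅ x).
Proof. by apply: (addm_sum (f := fun y => y ⋅ x)) => y z; rewrite nmulDl. Qed.

Lemma nmul0l (K : fieldType) (A : nalg K) (x : A) : 0 ⋅ x = 0.
Proof. exact: (addm0 (f := fun y => y ⋅ x)) (fun y z => nmulDl y z x). Qed.

Lemma nmul0r (K : fieldType) (A : nalg K) (x : A) : x ⋅ 0 = 0.
Proof. exact: (addm0 (f := fun y => x ⋅ y)) (fun y z => nmulDr x y z). Qed.

Lemma nmulBr (K : fieldType) (A : nalg K) (x y z : A) : x ⋅ (y - z) = x ⋅ y - x ⋅ z.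
Proof. exact: (addmB (f := fun y => x ⋅ y) (fun y z => nmulDr x y z) y z). Qed.

Lemma nmulBl (K : fieldType) (A : nalg K) (x y z : A) : (y - z) ⋅ x = y ⋅ x - z ⋅ x.
Proof. exact: (addmB (f := fun y => y ⋅ x) (fun y z => nmulDl y z x) y z). Qed.

Lemma inmap (T : eqType) (U : Type) (f : T -> U) (l : seq T) z :
  List.In z (map f l) -> exists2 y, y \in l & f y = z.
Proof.
elim: l => [|a l IH] //= [<-|/IH [y Hy <-]].
  by exists a; rewrite ?mem_head.
by exists y; rewrite // in_cons Hy orbT.
Qed.

Lemma nodupmap (T : eqType) (U : Type) (f : T -> U) (l : seq T) :
  injective f -> uniq l -> List.NoDup (map f l).
Proof.
move=> Hf; elim: l => [|a l IH] /=; first by constructor.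
case/andP=> Ha Hl; constructor; last exact: IH.
move=> Hin; have [y Hy /Hf Hya] := inmap Hin; by move: Ha; rewrite -Hya Hy.
Qed.

Theorem lemma3p3 (G : graph) (K : fieldType) (c : fld_invol K)
    (A : nalg K) (sA : ninv c A) (P : vert G -> A) (X Y : edge G -> A)
    (HL : is_LPA sA P X Y)
    (R : nalg K) (sR : ninv c R) (t : A -> R)
    (Ht : is_trace t) (Hlin : klinear t) (Hcan : canonical P X Y t) :
  (* (1) *)
  (forall (vp : vert G) (lp : list (edge G)) (vq : vert G) (lq : list (edge G))
          (m : nat) (rv : 'I_m -> vert G) (rl : 'I_m -> list (edge G)) (a : 'I_m -> K),
     is_path vp lp -> is_path vq lq -> path_rng vp lp = path_rng vq lq ->
     (forall i, is_path (rv i) (rl i) /\ rv i = path_rng vp lp) ->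
     let x := \sum_(i < m) a i *: (pathA P X vp lp ⋅ pathA P X (rv i) (rl i)
                                   ⋅ pathG P Y (rv i) (rl i) ⋅ pathG P Y vq lq) in
     let y := \sum_(i < m) a i *: (pathA P X (rv i) (rl i) ⋅ pathG P Y (rv i) (rl i)) in
     t (x ⋅ nstar sA x) = t (y ⋅ nstar sA y)) /\
  (* (2) *)
  (condP sR P t ->
   forall (v : vert G) (m : nat) (e : 'I_m -> edge G) (mi : 'I_m -> nat)
          (rv : forall i : 'I_m, 'I_(mi i) -> vert G)
          (rl : forall i : 'I_m, 'I_(mi i) -> list (edge G))
          (a : K) (aij : forall i : 'I_m, 'I_(mi i) -> K),
     injective e -> (forall i, src (e i) = v) ->
     (forall i j, is_path (rv i j) (rl i j) /\ rv i j = rng (e i)) ->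
     let S := \sum_(i < m) \sum_(j < mi i)
                aij i j *: (X (e i) ⋅ pathA P X (rv i j) (rl i j)
                            ⋅ pathG P Y (rv i j) (rl i j) ⋅ Y (e i)) in
     let x := S + a *: P v in
     let y := S + a *: \sum_(i < m) (X (e i) ⋅ Y (e i)) in
     npos sR (t (x ⋅ nstar sA x) - t (y ⋅ nstar sA y))).
Proof.
case: HL => [[HPP [HPo [HX [HY [HYX [HYXo HCK]]]]]] [_ [HsP [HsX HsY]]]].
have HPpath : forall e l, P (src e) ⋅ prodX X e l = prodX X e l.
  by move=> e [|f l] /=; rewrite ?nmulA (HX e).1.
have HPA : forall v l, is_path v l -> P v ⋅ pathA P X v l = pathA P X v l.
  by move=> v [|f l] /=; [rewrite HPP | case=> <- _; rewrite HPpath].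
have HstarX : forall e l, nstar sA (prodX X e l) = prodY Y e l.
  move=> e l; elim: l e => [|f l IH] e /=; first exact: HsX.
  by rewrite nstarM IH HsX.
have HstarA : forall v l, nstar sA (pathA P X v l) = pathG P Y v l.
  by move=> v [|f l] /=; [rewrite HsP | rewrite HstarX].
have HYXpath : forall e l, is_path (rng e) l ->
    prodY Y e l ⋅ prodX X e l = P (path_rng (rng e) l).
  move=> e l; elim: l e => [|f l IH] e /=; first by move=> _; exact: HYX.
  case=> Hf Hp.
  by rewrite -nmulA (nmulA (Y e)) HYX -Hf HPpath IH.
have HGA : forall v l, is_path v l -> pathG P Y v l ⋅ pathA P X v l = P (path_rng v l).
  by move=> v [|f l] /=; [rewrite HPP | case=> _ Hp; rewrite HYXpath].
split.
  move=> vp lp vq lq m rv rl a Hp Hq Hpq Hr x y.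
  set u := P (path_rng vp lp).
  have Hur : forall i, u ⋅ pathA P X (rv i) (rl i) = pathA P X (rv i) (rl i).
    by move=> i; case: (Hr i) => Hi1 Hi2; rewrite /u -Hi2 HPA.
  have Hrsu : forall i, pathG P Y (rv i) (rl i) ⋅ u = pathG P Y (rv i) (rl i).
    by move=> i; rewrite -HstarA /u -(HsP (path_rng vp lp)) -nstarM Hur.
  have Hyu : y ⋅ u = y.
    rewrite /y nmul_suml; apply: eq_bigr => i _.
    by rewrite nmulZl -nmulA Hrsu.
  have Huy : u ⋅ y = y.
    rewrite /y nmul_sumr; apply: eq_bigr => i _.
    by rewrite nmulZr nmulA Hur.
  have Hysu : nstar sA y ⋅ u = nstar sA y.
    by rewrite /u -(HsP (path_rng vp lp)) -nstarM Huy.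
  have Ex : x = (pathA P X vp lp ⋅ y) ⋅ pathG P Y vq lq.
    rewrite /x /y nmul_sumr nmul_suml; apply: eq_bigr => i _.
    by rewrite nmulZr nmulZl nmulA.
  have Eqs : nstar sA (pathG P Y vq lq) = pathA P X vq lq.
    by rewrite -HstarA nstarK.
  rewrite Ex !nstarM Eqs HstarA -!nmulA (nmulA (pathG P Y vq lq)) HGA // -Hpq -/u.
  rewrite (nmulA y u) Hyu Ht.2 -!nmulA HGA // -/u Hysu.
  by [].
move=> HP v m e mi rv rl a aij Hinj Hsrc Hpath S x y.
set f := \sum_(i < m) X (e i) ⋅ Y (e i).
set d := P v - f.
have HYf : forall i, Y (e i) ⋅ f = Y (e i).
  move=> i; rewrite /f nmul_sumr (bigD1 i) //= big1 ?addr0.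
    by rewrite nmulA HYX (HY _).1.
  move=> j Hji; rewrite nmulA HYXo ?nmul0l //.
  by move=> /Hinj Hij; move: Hji; rewrite Hij eqxx.
have HYv : forall i, Y (e i) ⋅ P v = Y (e i).
  by move=> i; rewrite -(Hsrc i) (HY _).2.
have Hff : f ⋅ f = f.
  rewrite {1}/f nmul_suml; apply: eq_bigr => i _; by rewrite -nmulA HYf.
have Hfv : f ⋅ P v = f.
  rewrite {1}/f nmul_suml; apply: eq_bigr => i _; by rewrite -nmulA HYv.
have Hvf : P v ⋅ f = f.
  rewrite {1}/f nmul_sumr; apply: eq_bigr => i _; by rewrite nmulA -(Hsrc i) (HX _).1.
have HSf : S ⋅ f = S.
  rewrite /S nmul_suml; apply: eq_bigr => i _.
  rewrite nmul_suml; apply: eq_bigr => j _.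
  by rewrite nmulZl -nmulA HYf.
have HSv : S ⋅ P v = S.
  rewrite /S nmul_suml; apply: eq_bigr => i _.
  rewrite nmul_suml; apply: eq_bigr => j _.
  by rewrite nmulZl -nmulA HYv.
have Hy : y ⋅ d = 0.
  rewrite /d nmulBr /y !nmulDl !nmulZl -/f HSf HSv Hff Hfv.
  by rewrite subrr.
have Hsd : nstar sA d = d.
  rewrite /d (addmB (nstarD sA)) HsP /f (addm_sum (nstarD sA)).
  congr (_ - _); apply: eq_bigr => i _.
  by rewrite nstarM HsX HsY.
have Hdd : d ⋅ d = d.
  rewrite {1}/d nmulBl /d !nmulBr HPP Hvf Hfv Hff.
  by rewrite subrr subr0.
have Hdy : d ⋅ nstar sA y = 0.
  by rewrite -{1}Hsd -nstarM Hy (addm0 (nstarD sA)).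
have Hx : x = y + a *: d.
  by rewrite /x /y /d -/f scalerBr addrA addrAC addrK.
have Exx : x ⋅ nstar sA x = y ⋅ nstar sA y + (a * fconj c a) *: d.
  rewrite Hx nstarD nstarZ Hsd (nmulDl y (a *: d)) (nmulDr y) (nmulDr (a *: d)).
  rewrite !nmulZl !nmulZr Hy Hdy Hdd.
  by rewrite !scaler0 add0r addr0 scalerA.
rewrite Exx Ht.1 addrC addKr Hlin.
have Htd : t d = t (P v - \sum_(e0 <- map e (index_enum 'I_m)) P (rng e0)).
  rewrite /d !(addmB Ht.1) big_map /f !(addm_sum Ht.1); congr (_ - _).
  by apply: eq_bigr => i _; rewrite Ht.2 HYX.
have [lz Hlz] : npos sR (t (P v - \sum_(e0 <- map e (index_enum 'I_m)) P (rng e0))).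
  apply: HP; first by apply: nodupmap => //; exact: index_enum_uniq.
  by move=> e0 Hin; have [i _ <-] := inmap Hin; exact: Hsrc.
exists (map (fun z => a *: z) lz).
rewrite Htd Hlz big_map scaler_sumr; apply: eq_bigr => z _.
by rewrite nstarZ nmulZl nmulZr scalerA.
Qed.
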